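(* Let $d\ge 0$ be an integer and let $G$ be any finite $d$-regular graph. Then \[ \hom(G,H_{\mathrm{WR}}) \le \hom(K_{d+1},H_{\mathrm{WR}})^{|V(G)|/(d+1)}, \] with equality if and only if $G$ is a disjoint union of copies of $K_{d+1}$.
   Context: Graphs $G$ are finite, simple and have at least one vertex. $H_{\mathrm{WR}}$ is the graph with vertex set $\{0,1,2\}$, edges $\{1,0\}$ and $\{0,2\}$, and a loop at each of $0,1,2$. $\hom(G,H)$ is the number of graph homomorphisms from $G$ to $H$, i.e. maps $V(G)\to V(H)$ sending adjacent vertices to adjacent vertices (a vertex with a loop is adjacent to itself). $K_{d+1}$ denotes the complete graph on $d+1$ vertices. *)

(* Defs.v *)
From mathcomp Require Import all_boot.
Set Implicit Arguments. Unset Strict Implicit. Unset Printing Implicit Defensive.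

Definition simple_graph (V : finType) (e : rel V) : Prop :=
  symmetric e /\ irreflexive e.

Definition regular (V : finType) (e : rel V) (d : nat) : Prop :=
  forall x : V, #|[set y | e x y]| = d.

Definition hom (V W : finType) (e : rel V) (h : rel W) : nat :=
  #|[set f : {ffun V -> W} | [forall x, forall y, e x y ==> h (f x) (f y)]]|.

(* H_WR on {0,1,2}: edges {1,0}, {0,2}, and a loop at each vertex. *)
Definition HWR_adj : rel 'I_3 := fun i j =>
  [|| i == j,
      (val i == 0) && (val j == 1), (val i == 1) && (val j == 0),
      (val i == 0) && (val j == 2) | (val i == 2) && (val j == 0)].

Definition K_adj (n : nat) : rel 'I_n := fun i j => i != j.
Arguments K_adj n : clear implicits.

Definition disjoint_union_of_cliques (V : finType) (e : rel V) (n : nat) : Prop :=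
  exists P : {set {set V}},
    [/\ partition P [set: V],
        (forall B, B \in P -> #|B| = n) &
        (forall x y, e x y = (x != y) && (pblock P x == pblock P y))].

(* Main.v *)
Require Import Defs.
From mathcomp Require Import all_boot all_order all_algebra algC.
Require Import Defs.
Import Order.TTheory GRing.Theory Num.Theory.

Section Sums.
Variables (T : finType) (R : nmodType).
Local Open Scope ring_scope.

Lemma sum_setU (X Y : {set T}) (F : {set T} -> R) : [disjoint X & Y] ->
  \sum_(B : {set T} | B \subset X :|: Y) F B =
  \sum_(C : {set T} | C \subset X) \sum_(D : {set T} | D \subset Y) F (C :|: D).
Proof.
move=> dXY; rewrite [RHS]pair_big_dep /=.
rewrite (reindex_onto (fun p : {set T} * {set T} => p.1 :|: p.2)
   (fun B => (B :&: X, B :&: Y))) /=; last first.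
  by move=> B sB; rewrite -setIUr; apply/setIidPl.
apply: eq_bigl => -[C D] /=.
apply/idP/idP.
  move=> /andP[_ /eqP [<- <-]]; by rewrite subsetIr subsetIr.
move=> /andP[sCX sDY]; rewrite setUSS //= xpair_eqE !setIUl.
have -> : D :&: X = set0.
  apply/eqP; rewrite setI_eq0; apply: disjointWl sDY _; by rewrite disjoint_sym.
have -> : C :&: Y = set0.
  apply/eqP; rewrite setI_eq0; exact: disjointWl sCX dXY.
by rewrite (setIidPl sCX) (setIidPl sDY) setU0 set0U !eqxx.
Qed.

Lemma sum_split (A : {set T}) i (F : {set T} -> R) : i \notin A ->
  \sum_(B : {set T} | B \subset i |: A) F B = \sum_(B : {set T} | B \subset A) (F B + F (i |: B)).
Proof.
move=> iA; rewrite sum_setU ?disjoints1 //.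
rewrite (bigD1 set0) ?sub0set //= [X in _ + X](big_pred1 [set i]); last first.
  move=> C; rewrite /= subset1; case: (C =P [set i]) => [->|_] /=.
    by apply/negP => /eqP/setP/(_ i); rewrite !inE eqxx.
  by case: (C == set0).
rewrite -big_split /=; apply: eq_bigr => B _; by rewrite set0U.
Qed.
End Sums.
Section Holder.
Variables (C : numClosedFieldType) (n : nat).
Hypothesis n_gt0 : (0 < n)%N.
Local Open Scope ring_scope.

Lemma amgm_leif (J : finType) (A : {pred J}) (u : J -> C) : #|A| = n ->
  (forall j, 0 <= u j) ->
  \prod_(j in A) u j ^+ n <= ((\sum_(j in A) u j ^+ n) / n%:R) ^+ n
   ?= iff [forall i in A, forall j in A, u i ^+ n == u j ^+ n].
Proof.
move=> cA u0; rewrite -cA.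
by apply: (leif_AGM (E := fun j => u j ^+ #|A|)) => j _; rewrite exprn_ge0.
Qed.

Lemma amgm_le (J : finType) (A : {pred J}) (u : J -> C) : #|A| = n ->
  (forall j, 0 <= u j) ->
  \prod_(j in A) u j <= (\sum_(j in A) u j ^+ n) / n%:R.
Proof.
move=> cA u0.
have nn1 : 0 <= \prod_(j in A) u j by apply: prodr_ge0.
have nn2 : 0 <= (\sum_(j in A) u j ^+ n) / n%:R.
  by rewrite divr_ge0 // sumr_ge0 // => j _; rewrite exprn_ge0.
rewrite -(ler_pXn2r n_gt0) ?nnegrE // -prodrXl.
exact: (@amgm_leif J A u cA u0).1.
Qed.

Lemma amgm_lt (J : finType) (A : {pred J}) (u : J -> C) : #|A| = n ->
  (forall j, 0 <= u j) ->
  ~~ [forall i in A, forall j in A, u i ^+ n == u j ^+ n] ->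
  \prod_(j in A) u j < (\sum_(j in A) u j ^+ n) / n%:R.
Proof.
move=> cA u0 neq.
have nn1 : 0 <= \prod_(j in A) u j by apply: prodr_ge0.
have nn2 : 0 <= (\sum_(j in A) u j ^+ n) / n%:R.
  by rewrite divr_ge0 // sumr_ge0 // => j _; rewrite exprn_ge0.
rewrite -(ltr_pXn2r n_gt0) ?nnegrE // -prodrXl.
by rewrite (lt_leif (@amgm_leif J A u cA u0)).
Qed.

Section Core.
Variables (J : finType) (A : {pred J}) (a b : J -> C).
Hypothesis cA : #|A| = n.
Hypothesis a0 : forall j, 0 <= a j.
Hypothesis b0 : forall j, 0 <= b j.
Let r j := n.-root (a j ^+ n + b j ^+ n).

Lemma r_ge0 j : 0 <= r j.
Proof. by rewrite /r rootC_ge0 // addr_ge0 // exprn_ge0. Qed.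

Lemma rK j : r j ^+ n = a j ^+ n + b j ^+ n.
Proof. by rewrite /r rootCK. Qed.

Hypothesis r_gt0 : forall j, j \in A -> 0 < r j.

Lemma core_eq : \prod_(j in A) a j + \prod_(j in A) b j =
  (\prod_(j in A) (a j / r j) + \prod_(j in A) (b j / r j)) * \prod_(j in A) r j.
Proof.
rewrite mulrDl -!big_split /=; congr (_ + _); apply: eq_bigr => j jA;
  by rewrite divfK // gt_eqF // r_gt0.
Qed.

Lemma core_means :
  (\sum_(j in A) (a j / r j) ^+ n) / n%:R + (\sum_(j in A) (b j / r j) ^+ n) / n%:R = 1.
Proof.
rewrite -mulrDl -big_split /=.
rewrite (eq_bigr (fun _ => 1)); last first.
  move=> j jA; rewrite !expr_div_n -mulrDl -rK divff //.
  by rewrite expf_neq0 // gt_eqF // r_gt0.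
by rewrite sumr_const cA divff // pnatr_eq0 -lt0n.
Qed.
End Core.

Lemma holder2 (J : finType) (A : {pred J}) (a b : J -> C) : #|A| = n ->
  (forall j, 0 <= a j) -> (forall j, 0 <= b j) ->
  \prod_(j in A) a j + \prod_(j in A) b j <=
  \prod_(j in A) n.-root (a j ^+ n + b j ^+ n).
Proof.
move=> cA a0 b0.
have rg j : 0 <= n.-root (a j ^+ n + b j ^+ n) by rewrite rootC_ge0 // addr_ge0 // exprn_ge0.
case: (boolP [exists j in A, n.-root (a j ^+ n + b j ^+ n) == 0]).
  move=> /existsP [j /andP [jA /eqP rj0]].
  have : a j ^+ n + b j ^+ n == 0 by rewrite -[a j ^+ n + _](rootCK n_gt0) rj0 expr0n gtn_eqF.
  rewrite paddr_eq0 ?exprn_ge0 // !expf_eq0 n_gt0 /= => /andP [/eqP aj /eqP bj].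
  rewrite [X in X + _](bigD1 j jA) [X in _ + X](bigD1 j jA) /= aj bj !mul0r addr0.
  by apply: prodr_ge0 => k _; exact: rg.
rewrite negb_exists => /forallP rne0.
have r_gt0 j : j \in A -> 0 < n.-root (a j ^+ n + b j ^+ n).
  move=> jA; have := rne0 j; rewrite jA /= => h.
  by rewrite lt_def h rg.
rewrite (@core_eq J A a b r_gt0) ler_piMl //. all: try (by apply: prodr_ge0 => k _; apply: rg).
rewrite -[X in _ <= X](@core_means J A a b cA r_gt0).
apply: lerD.
  by apply: (@amgm_le J A (fun j => a j / n.-root (a j ^+ n + b j ^+ n))) => // j; rewrite divr_ge0 // rg.
by apply: (@amgm_le J A (fun j => b j / n.-root (a j ^+ n + b j ^+ n))) => // j; rewrite divr_ge0 // rg.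
Qed.

Lemma holder2_lt (J : finType) (A : {pred J}) (a b : J -> C) : #|A| = n ->
  (forall j, 0 < a j) -> (forall j, 0 < b j) ->
  forall j k, j \in A -> k \in A -> a j * b k != a k * b j ->
  \prod_(j in A) a j + \prod_(j in A) b j <
  \prod_(j in A) n.-root (a j ^+ n + b j ^+ n).
Proof.
move=> cA a0 b0 j k jA kA neq.
have a0' i : 0 <= a i by apply: ltW.
have b0' i : 0 <= b i by apply: ltW.
have rg i : 0 <= n.-root (a i ^+ n + b i ^+ n) by rewrite rootC_ge0 // addr_ge0 // exprn_ge0.
have r_gt0 i : i \in A -> 0 < n.-root (a i ^+ n + b i ^+ n).
  move=> _; by rewrite rootC_gt0 // ltr_pwDl ?exprn_gt0 ?exprn_ge0.
rewrite (@core_eq J A a b r_gt0) gtr_pMl; last first.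
  by apply: prodr_gt0 => i iA; apply: r_gt0.
rewrite -[X in _ < X](@core_means J A a b cA r_gt0).
apply: ltr_leD; last by apply: (@amgm_le J A (fun j => b j / n.-root (a j ^+ n + b j ^+ n))) => // i; rewrite divr_ge0 // rg.
apply: (@amgm_lt J A (fun j => a j / n.-root (a j ^+ n + b j ^+ n))) => //; first by move=> i; rewrite divr_ge0 // rg.
apply/negP => /forallP /(_ j) /implyP /(_ jA) /forallP /(_ k) /implyP /(_ kA).
rewrite !expr_div_n !rK.
set pj := a j ^+ n; set pk := a k ^+ n; set qj := b j ^+ n; set qk := b k ^+ n.
have hj : pj + qj != 0 by rewrite gt_eqF // ltr_pwDl ?exprn_gt0 ?exprn_ge0.
have hk : pk + qk != 0 by rewrite gt_eqF // ltr_pwDl ?exprn_gt0 ?exprn_ge0.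
rewrite eqr_div // => /eqP h.
move: neq; rewrite -(eqrXn2 n_gt0) ?mulr_ge0 // !exprMn -/pj -/pk -/qj -/qk.
suff -> : pj * qk = pk * qj by rewrite eqxx.
by move: h; rewrite mulrDr mulrDr [pk * pj]mulrC => /addrI.
Qed.
End Holder.

Section Finner.
Variables (C : numClosedFieldType) (I X : finType) (n : nat).
Hypothesis n_gt0 : (0 < n)%N.
Local Open Scope ring_scope.

Implicit Types (S : X -> {set I}) (f : X -> {set I} -> C) (D B : {set I}).
Definition lhs (D : {set I}) (S : X -> {set I}) (f : X -> {set I} -> C) :=
  \sum_(B : {set I} | B \subset D) \prod_x f x (B :&: S x).
Definition rhs (S : X -> {set I}) (f : X -> {set I} -> C) :=
  \prod_x \sum_(B : {set I} | B \subset S x) f x B ^+ n.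
Definition Sd i (S : X -> {set I}) x := S x :\ i.
Definition Fd i (S : X -> {set I}) (f : X -> {set I} -> C) x B :=
  if i \in S x then n.-root (f x B ^+ n + f x (i |: B) ^+ n) else f x B.

Lemma rhs_step i S f : rhs S f = rhs (Sd i S) (Fd i S f).
Proof.
apply: eq_bigr => x _; rewrite /Sd /Fd.
case: (boolP (i \in S x)) => iS.
  rewrite -{1}(setD1K iS) sum_split ?setD11 //.
  by apply: eq_bigr => B _; rewrite rootCK.
have -> : S x :\ i = S x.
  by apply/setP => z; rewrite !inE; case: eqP => // ->; rewrite (negPf iS).
done.
Qed.

Lemma lhs_step (D : {set I}) S f i : i \in D -> lhs D S f =
  \sum_(B : {set I} | B \subset D :\ i)
    (\prod_x f x (B :&: S x) + \prod_x f x ((i |: B) :&: S x)).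
Proof. by move=> iD; rewrite /lhs -{1}(setD1K iD) sum_split ?setD11. Qed.

Lemma term_decomp S f i (B : {set I}) : i \notin B ->
  \prod_x f x (B :&: S x) + \prod_x f x ((i |: B) :&: S x) =
  (\prod_(x | i \in S x) f x (B :&: S x) + \prod_(x | i \in S x) f x (i |: (B :&: S x)))
   * \prod_(x | i \notin S x) f x (B :&: S x).
Proof.
move=> iB; rewrite mulrDl [X in X + _](bigID (fun x => i \in S x)) /=.
rewrite [X in _ + X](bigID (fun x => i \in S x)) /=; congr (_ + _).
congr (_ * _); apply: eq_bigr => x iS.
  congr (f x _); apply/setP => z; rewrite !inE; case: (z =P i) => // ->.
  by rewrite iS.
congr (f x _); apply/setP => z; rewrite !inE; case: (z =P i) => // ->.
by rewrite (negPf iS) (negPf iB).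
Qed.

Lemma term'_decomp S f i B : i \notin B ->
  \prod_x Fd i S f x (B :&: Sd i S x) =
  \prod_(x | i \in S x) n.-root (f x (B :&: S x) ^+ n + f x (i |: (B :&: S x)) ^+ n)
   * \prod_(x | i \notin S x) f x (B :&: S x).
Proof.
move=> iB; rewrite (bigID (fun x => i \in S x)) /=.
have e x : B :&: Sd i S x = B :&: S x.
  apply/setP => z; rewrite /Sd !inE; case: (z =P i) => // ->.
  by rewrite (negPf iB).
congr (_ * _); apply: eq_bigr => x iS; rewrite e /Fd; [by rewrite iS | by rewrite (negPf iS)].
Qed.

Lemma term_le (D : {set I}) S f i (B : {set I}) : B \subset D :\ i ->
  #|[set x | i \in S x]| = n -> (forall x B, 0 <= f x B) ->
  \prod_x f x (B :&: S x) + \prod_x f x ((i |: B) :&: S x) <=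
  \prod_x Fd i S f x (B :&: Sd i S x).
Proof.
move=> sB cov f0.
have iB : i \notin B by apply: contraTN sB => iB; apply/subsetPn; exists i; rewrite // !inE eqxx.
rewrite term_decomp // term'_decomp //.
apply: ler_wpM2r; first by apply: prodr_ge0.
have := @holder2 C n n_gt0 X [pred x | i \in S x] (fun x => f x (B :&: S x))
  (fun x => f x (i |: (B :&: S x))).
rewrite -cov cardsE => /(_ erefl (fun _ => f0 _ _) (fun _ => f0 _ _)).
by rewrite -cardsE cov.
Qed.

Lemma lhs_ge0 D S f : (forall x B, 0 <= f x B) -> 0 <= lhs D S f.
Proof. by move=> f0; apply: sumr_ge0 => B _; apply: prodr_ge0. Qed.

Lemma finner_step (D : {set I}) S f i : i \in D ->
  #|[set x | i \in S x]| = n -> (forall x B, 0 <= f x B) ->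
  lhs D S f <= lhs (D :\ i) (Sd i S) (Fd i S f).
Proof.
move=> iD cov f0; rewrite (@lhs_step D S f i iD) /lhs; apply: ler_sum => B sB.
exact: (@term_le D S f i B sB cov f0).
Qed.

Lemma Fd_ge0 i S f : (forall x B, 0 <= f x B) -> forall x B, 0 <= Fd i S f x B.
Proof.
move=> f0 x B; rewrite /Fd; case: (i \in S x) => //.
by rewrite rootC_ge0 // addr_ge0 // exprn_ge0.
Qed.

Lemma finner k : forall D S f, #|D| = k -> (forall x, S x \subset D) ->
  (forall j, j \in D -> #|[set x | j \in S x]| = n) ->
  (forall x B, 0 <= f x B) -> lhs D S f ^+ n <= rhs S f.
Proof.
elim: k => [|k IH] D S f cD sSD cov f0.
  have D0 : D = set0 by apply/eqP; rewrite -cards_eq0 cD.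
  have S0 x : S x = set0 by apply/eqP; rewrite -subset0 -D0 sSD.
  rewrite /lhs /rhs D0 (big_pred1 set0); last by move=> B; rewrite /= subset0.
  rewrite -prodrXl le_eqVlt; apply/orP; left; apply/eqP; apply: eq_bigr => x _.
  rewrite S0 set0I (big_pred1 set0) // => B; by rewrite /= subset0.
have /set0Pn [i iD] : D != set0 by rewrite -cards_eq0 cD.
apply: (@le_trans _ _ (lhs (D :\ i) (Sd i S) (Fd i S f) ^+ n)).
  rewrite ler_pXn2r // ?nnegrE ?lhs_ge0 //; last exact: (@Fd_ge0 i S f f0).
  exact: (@finner_step D S f i iD (cov i iD) f0).
rewrite (rhs_step i); apply: IH.
- by move: cD; rewrite (cardsD1 i) iD add1n => -[].
- by move=> x; rewrite /Sd setSD.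
- move=> j; rewrite !inE => /andP [ji jD].
  have -> : [set x | j \in Sd i S x] = [set x | j \in S x].
    by apply/setP => x; rewrite !inE /Sd ?inE ji.
  exact: cov.
- exact: Fd_ge0.
Qed.

Lemma term_lt (D : {set I}) S f i (B : {set I}) : B \subset D :\ i ->
  #|[set x | i \in S x]| = n -> (forall x B, 0 < f x B) ->
  forall j k, i \in S j -> i \in S k ->
  f j (B :&: S j) * f k (i |: (B :&: S k)) != f k (B :&: S k) * f j (i |: (B :&: S j)) ->
  \prod_x f x (B :&: S x) + \prod_x f x ((i |: B) :&: S x) <
  \prod_x Fd i S f x (B :&: Sd i S x).
Proof.
move=> sB cov f0 j k ij ik neq.
have iB : i \notin B by apply: contraTN sB => iB; apply/subsetPn; exists i; rewrite // !inE eqxx.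
rewrite term_decomp // term'_decomp //.
rewrite ltr_pM2r; last by apply: prodr_gt0.
have := @holder2_lt C n n_gt0 X [pred x | i \in S x] (fun x => f x (B :&: S x))
  (fun x => f x (i |: (B :&: S x))).
rewrite -cov cardsE => /(_ erefl (fun _ => f0 _ _) (fun _ => f0 _ _) j k ij ik neq).
by rewrite -cardsE cov.
Qed.

Lemma finner_lt D S f i B0 : (forall x, S x \subset D) ->
  (forall j, j \in D -> #|[set x | j \in S x]| = n) ->
  (forall x B, 0 < f x B) -> i \in D -> B0 \subset D :\ i ->
  (exists j k, [/\ i \in S j, i \in S k &
    f j (B0 :&: S j) * f k (i |: (B0 :&: S k)) != f k (B0 :&: S k) * f j (i |: (B0 :&: S j))]) ->
  lhs D S f ^+ n < rhs S f.
Proof.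
move=> sSD cov f0 iD sB0 [j [k [ij ik neq]]].
have f0' x B : 0 <= f x B by apply: ltW.
apply: (@lt_le_trans _ _ (lhs (D :\ i) (Sd i S) (Fd i S f) ^+ n)).
  rewrite ltr_pXn2r // ?nnegrE ?lhs_ge0 //; last exact: (@Fd_ge0 i S f f0').
  rewrite (@lhs_step D S f i iD) /lhs (bigD1 B0) //= [X in _ < X](bigD1 B0) //=.
  apply: ltr_leD; first exact: (@term_lt D S f i B0 sB0 (cov i iD) f0 j k ij ik neq).
  apply: ler_sum => B /andP [sB _]; exact: (@term_le D S f i B sB (cov i iD) f0').
rewrite (rhs_step i); apply: (@finner #|D :\ i|) => //.
- by move=> x; rewrite /Sd setSD.
- move=> j'; rewrite !inE => /andP [ji jD].
  have -> : [set x | j' \in Sd i S x] = [set x | j' \in S x].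
    by apply/setP => x; rewrite !inE /Sd ?inE ji.
  exact: cov.
- exact: (@Fd_ge0 i S f f0').
Qed.
End Finner.
Section Part.
Variables (T : finType) (R : comNzRingType).
Local Open Scope ring_scope.

Lemma sum_prod_partition k : forall (Q : {set {set T}}) (h : {set T} -> {set T} -> R),
  #|Q| = k -> trivIset Q ->
  \sum_(B : {set T} | B \subset cover Q) \prod_(b in Q) h b (B :&: b) =
  \prod_(b in Q) \sum_(Cs : {set T} | Cs \subset b) h b Cs.
Proof.
elim: k => [|k IH] Q h cQ tQ.
  have Q0 : Q = set0 by apply/eqP; rewrite -cards_eq0 cQ.
  rewrite Q0 big_set0 /cover big_set0 (big_pred1 set0); last by move=> B; rewrite /= subset0.
  by rewrite big_set0.
have /set0Pn [b0 b0Q] : Q != set0 by rewrite -cards_eq0 cQ.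
set Q' := Q :\ b0.
have tQ' : trivIset Q' by apply: trivIsetS tQ; apply: subsetDl.
have cQ' : #|Q'| = k by move: cQ; rewrite (cardsD1 b0) b0Q add1n => -[].
have dis b : b \in Q' -> [disjoint b0 & b].
  rewrite !inE => /andP [bb0 bQ]; move/trivIsetP: tQ => /(_ b0 b b0Q bQ); apply.
  by rewrite eq_sym.
have covQ : cover Q = b0 :|: cover Q'.
  by rewrite /cover -{1}(setD1K b0Q) big_setU1 //= setD11.
have dcov : [disjoint b0 & cover Q'] by apply: bigcup_disjoint => b; exact: dis.
rewrite covQ sum_setU //.
rewrite [RHS](bigD1 b0) //=.
have E : \prod_(b | (b \in Q) && (b != b0)) \sum_(Cs : {set T} | Cs \subset b) h b Cs =
  \sum_(B : {set T} | B \subset cover Q') \prod_(b in Q') h b (B :&: b).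
  by rewrite (IH Q' h cQ' tQ'); apply: eq_bigl => b; rewrite !inE andbC.
rewrite E.
rewrite big_distrl /=; apply: eq_bigr => Cs sC.
rewrite big_distrr /=; apply: eq_bigr => Ds sD.
rewrite (bigD1 b0) //=; congr (_ * _).
  congr (h b0 _); rewrite setIUl (setIidPl sC).
  have -> : Ds :&: b0 = set0.
    apply/eqP; rewrite setI_eq0 disjoint_sym; exact: disjointWr sD dcov.
  by rewrite setU0.
rewrite (eq_bigl (fun b => b \in Q')); last by move=> b; rewrite !inE andbC.
apply: eq_bigr => b bQ'; congr (h b _); rewrite setIUl.
have -> : Cs :&: b = set0.
  apply/eqP; rewrite setI_eq0; exact: disjointWl sC (dis b bQ').
by rewrite set0U.
Qed.
End Part.
Lemma HWR_adjE (c c' : 'I_3) : HWR_adj c c' =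
  ~~ (((c:nat) == 1) && ((c':nat) == 2) || ((c:nat) == 2) && ((c':nat) == 1)).
Proof. by case: c => [[|[|[|]]] ?] //; case: c' => [[|[|[|]]] ?]. Qed.

Lemma card3 (p q : bool) :
  #|[pred c : 'I_3 | (((c:nat) == 2) == p) && (((c:nat) == 1) ==> q)]| =
  if p then 1 else if q then 2 else 1.
Proof.
rewrite -sum1_card big_mkcond /= !big_ord_recr big_ord0 /=.
by case: p; case: q.
Qed.

Lemma card_family_prod (V : finType) (F : V -> pred 'I_3) :
  #|family F| = \prod_x #|F x|.
Proof. by rewrite card_family foldrE big_map big_enum. Qed.

Definition NB (V : finType) (e : rel V) (x : V) : {set V} := x |: [set y | e x y].
Definition gW (T : finType) (B : {set T}) : nat := if B == set0 then 2 else 1.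
Arguments NB {V} e x.
Arguments gW {T} B.

Lemma hom_sum (V : finType) (e : rel V) : symmetric e ->
  hom e HWR_adj = \sum_(B : {set V}) \prod_x gW (B :&: NB e x).
Proof.
move=> esym.
rewrite /hom -sum1_card (partition_big (fun f : {ffun V -> 'I_3} =>
  [set x | (f x : nat) == 2]) predT) //=.
apply: eq_bigr => B _.
pose FB x := [pred c : 'I_3 | (((c : nat) == 2) == (x \in B)) &&
   (((c:nat) == 1) ==> (B :&: NB e x == set0))].
rewrite (eq_bigl (fun f => f \in family FB)); last first.
  move=> f; apply/idP/idP.
    move=> /andP [Hv /eqP HB]; apply/familyP => x; rewrite inE.
    rewrite -HB inE eqxx /=; apply/implyP => f1; apply/eqP/setP => y.
    rewrite !inE; apply/negP => /andP [fy2 /orP [/eqP yx | exy]].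
      by move: f1 fy2; rewrite yx => /eqP ->.
    move: Hv; rewrite inE => /forallP /(_ x) /forallP /(_ y) /implyP /(_ exy).
    by rewrite HWR_adjE (eqP f1) fy2.
  move=> /familyP Hf.
  have HB : [set x | (f x : nat) == 2] = B.
    by apply/setP => x; rewrite inE; have := Hf x; rewrite inE => /andP [/eqP -> _].
  rewrite HB eqxx andbT inE.
  apply/forallP => x; apply/forallP => y; apply/implyP => exy.
  rewrite HWR_adjE; apply/negP => /orP [/andP [fx1 fy2] | /andP [fx2 fy1]].
    have := Hf x; rewrite inE fx1 /= => /andP [_ /eqP /setP /(_ y)]; rewrite !inE.
    have := Hf y; rewrite inE fy2 /= => /andP [/eqP <- _].
    by rewrite exy orbT.
  have := Hf y; rewrite inE fy1 /= => /andP [_ /eqP /setP /(_ x)]; rewrite !inE.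
  have := Hf x; rewrite inE fx2 /= => /andP [/eqP <- _].
  by rewrite esym exy orbT.
rewrite sum1_card card_family_prod; apply: eq_bigr => x _.
rewrite card3 /gW.
case: (boolP (x \in B)) => xB.
  suff -> : (B :&: NB e x == set0) = false by [].
  by apply/negP => /eqP /setP /(_ x); rewrite !inE xB eqxx.
by case: (B :&: NB e x == set0).
Qed.

Lemma sum_gW (T : finType) (A : {set T}) k :
  \sum_(Cs : {set T} | Cs \subset A) gW Cs ^ k = 2 ^ k + (2 ^ #|A| - 1).
Proof.
rewrite (bigD1 set0) ?sub0set //= {1}/gW eqxx; congr (_ + _).
rewrite (eq_bigr (fun _ => 1)); last by move=> Cs /andP [_ H]; rewrite /gW (negPf H) exp1n.
rewrite sum1dep_card.
have -> : [set Cs : {set T} | (Cs \subset A) && (Cs != set0)] = powerset A :\ set0.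
  by apply/setP => Cs; rewrite !inE ?powersetE andbC.
have := cardsD1 set0 (powerset A); rewrite powersetE sub0set card_powerset add1n => ->.
by rewrite subn1.
Qed.

Lemma csum_gW (C : numClosedFieldType) (T : finType) (A : {set T}) k :
  (\sum_(Cs : {set T} | Cs \subset A) ((gW Cs)%:R : C) ^+ k = (2 ^ k + (2 ^ #|A| - 1))%:R)%R.
Proof. by rewrite -sum_gW natr_sum; apply: eq_bigr => Cs _; rewrite natrX. Qed.

Lemma hom_K n : hom (K_adj n.+1) HWR_adj = 2 ^ n.+1 + (2 ^ n.+1 - 1).
Proof.
rewrite hom_sum; last by move=> x y; rewrite /K_adj eq_sym.
have NBT x : NB (K_adj n.+1) x = setT.
  by apply/setP => y; rewrite !inE /K_adj; case: eqVneq.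
rewrite (eq_bigr (fun B => gW B ^ n.+1)); last first.
  move=> B _; rewrite (eq_bigr (fun _ => gW B)); last by move=> x _; rewrite NBT setIT.
  by rewrite prod_nat_const card_ord.
rewrite (eq_bigl (fun B : {set 'I_n.+1} => B \subset setT)); last by move=> B; rewrite subsetT.
by rewrite sum_gW cardsT card_ord.
Qed.

Theorem corollary2 (d : nat) (V : finType) (e : rel V) :
  simple_graph e -> 0 < #|V| -> regular e d ->
  (hom e HWR_adj) ^ d.+1 <= (hom (K_adj d.+1) HWR_adj) ^ #|V|
  /\ ((hom e HWR_adj) ^ d.+1 = (hom (K_adj d.+1) HWR_adj) ^ #|V|
      <-> disjoint_union_of_cliques e d.+1).
Proof.
move=> [esym eirr] V0 reg.
rewrite hom_K.
set n := d.+1; set K := 2 ^ n + (2 ^ n - 1).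
have n_gt0 : 0 < n by [].
have NBcard x : #|NB e x| = n by rewrite /NB cardsU1 inE eirr reg.
have xNB x : x \in NB e x by rewrite !inE eqxx.
have cov j : j \in [set: V] -> #|[set x | j \in NB e x]| = n.
  move=> _; rewrite -(NBcard j); apply: eq_card => x.
  by rewrite !inE esym eq_sym.
pose f (x : V) (B : {set V}) := ((gW B)%:R : algC)%R.
have f0 x B : (0 < f x B)%R by rewrite /f ltr0n /gW; case: (B == set0).
have f0' x B : (0 <= f x B)%R by apply: ltW.
have homE : ((hom e HWR_adj)%:R : algC)%R = @lhs algC V V setT (NB e) f.
  rewrite hom_sum // natr_sum /lhs; apply: eq_big => [B|B _]; first by rewrite subsetT.
  by rewrite natr_prod.
have rhsE : @rhs algC V V n (NB e) f = (K%:R ^+ #|V|)%R.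
  rewrite /rhs (eq_bigr (fun _ => (K%:R)%R)); last by move=> x _; rewrite csum_gW NBcard.
  by rewrite prodr_const.
have le : (((hom e HWR_adj)%:R : algC) ^+ n <= K%:R ^+ #|V|)%R.
  rewrite homE -rhsE; apply: (@finner algC V V n n_gt0 #|[set: V]|) => //.
split; first by rewrite -!natrX ler_nat in le.
split.
- move=> Heq.
  case: (boolP [exists i, exists y, exists w, [&& e i y, w \in NB e y & w \notin NB e i]]).
    move=> /existsP [i /existsP [y /existsP [w /and3P [eiy wy wi]]]].
    have lt : (((hom e HWR_adj)%:R : algC) ^+ n < K%:R ^+ #|V|)%R.
      rewrite homE -rhsE; apply: (@finner_lt algC V V n n_gt0 setT (NB e) f i [set w]) => //.
      + by rewrite sub1set !inE andbT; apply: contraNneq wi => ->; rewrite xNB.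
      exists i, y; split => //; first by rewrite !inE esym eiy orbT.
      have e1 : [set w] :&: NB e i = set0 by apply/eqP; rewrite setI_eq0 disjoints1.
      have e2 : ([set w] :&: NB e y == set0) = false.
        by apply/negP => /eqP/setP/(_ w); rewrite in_setI in_set1 eqxx wy inE.
      have e3 (A : {set V}) : (i |: A == set0) = false.
        by apply/negP => /eqP/setP/(_ i); rewrite !inE eqxx.
      by rewrite /f /gW e1 e2 !e3 eqxx -!natrM eqr_nat.
    by rewrite -!natrX ltr_nat Heq ltnn in lt.
  move=> /negP H.
  have sub i y : e i y -> NB e y \subset NB e i.
    move=> eiy; apply/subsetP => w wy; apply/negPn/negP => wi; apply: H.
    by apply/existsP; exists i; apply/existsP; exists y; apply/existsP; exists w; rewrite eiy wy wi.
  have eqNB i y : e i y -> NB e i = NB e y.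
    by move=> eiy; apply/eqP; rewrite eqEsubset (sub _ _ eiy) andbT; apply: sub; rewrite esym.
  have key x z : z \in NB e x -> NB e z = NB e x.
    rewrite !inE => /orP [/eqP -> // | exz]; by rewrite (eqNB _ _ exz).
  pose P := [set NB e x | x in [set: V]].
  have tP : trivIset P.
    apply/trivIsetP => A B /imsetP [x _ ->] /imsetP [y _ ->] neq.
    rewrite -setI_eq0; case: (set_0Vmem (NB e x :&: NB e y)) => [->//|[z]].
    rewrite inE => /andP [zx zy]; move: neq; by rewrite -(key _ _ zx) -(key _ _ zy) eqxx.
  have covP : cover P = setT.
    apply/setP => x; rewrite in_setT; apply/bigcupP; exists (NB e x) => //.
    by apply: imset_f; rewrite in_setT.
  have nP : set0 \notin P.
    by apply/imsetP => -[x _ Hx]; move: (xNB x); rewrite -Hx inE.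
  exists P; split.
  + by rewrite /partition covP eqxx tP nP.
  + by move=> B /imsetP [x _ ->]; exact: NBcard.
  move=> x y.
  rewrite (def_pblock tP (imset_f _ (in_setT x)) (xNB x)).
  rewrite (def_pblock tP (imset_f _ (in_setT y)) (xNB y)).
  apply/idP/andP => [exy | [xy /eqP Exy]].
    split; last by apply/eqP; exact: eqNB.
    by apply/eqP => xy; rewrite xy eirr in exy.
  have : y \in NB e x by rewrite Exy xNB.
  by rewrite !inE eq_sym (negPf xy).
- move=> [P [pP sizes adj]].
  have tP : trivIset P by case/and3P: pP.
  have covP : cover P = setT by case/and3P: pP => /eqP.
  have NBblock x : NB e x = pblock P x.
    apply/setP => y; rewrite !inE adj (eq_pblock _ tP) ?covP ?in_setT //.
    case: (y =P x) => [-> | /eqP yx] /=; first by rewrite mem_pblock covP in_setT.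
    by rewrite eq_sym yx.
  have homP : ((hom e HWR_adj)%:R : algC)%R = (K%:R ^+ #|P|)%R.
    rewrite hom_sum // natr_sum.
    have E2 : (\prod_(b in P) (K%:R : algC))%R =
       (\prod_(b in P) \sum_(Cs : {set V} | Cs \subset b) ((gW Cs)%:R : algC) ^+ n)%R.
      by apply: eq_bigr => b bP; rewrite csum_gW sizes.
    rewrite -prodr_const E2.
    rewrite -(@sum_prod_partition V algC #|P| P (fun b Cs => ((gW Cs)%:R : algC) ^+ n)%R) //.
    rewrite covP; apply: eq_big => [B | B _]; first by rewrite subsetT.
    rewrite natr_prod (eq_bigl (fun x : V => x \in [set: V])); last by move=> x; rewrite in_setT.
    rewrite (set_partition_big _ pP); apply: eq_bigr => b bP.
    rewrite (eq_bigr (fun _ => ((gW (B :&: b))%:R : algC)%R)); last first.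
      move=> x xb; by rewrite NBblock (def_pblock tP bP xb).
    by rewrite prodr_const sizes.
  have cV : #|V| = #|P| * n.
    by rewrite -cardsT (card_partition pP) (eq_bigr (fun _ => n)) // sum_nat_const.
  have hE : hom e HWR_adj = K ^ #|P|.
    by apply/eqP; rewrite -(eqr_nat algC) natrX homP.
  by rewrite hE cV -!expnM mulnC.
Qed.
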